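(* Assume that the hairpin completion $\mathcal{H}_k(L_1,L_2)$ is regular and that every state of the NFA $\mathcal{A}$ is reachable from an initial state and can reach a final state. Let $\kappa$ be a non-trivial strongly connected component of $\mathcal{A}$ with $N_\kappa$ states, let $A\in\kappa$ and let $A\xrightarrow{v_A}A$ be a path in $\kappa$ with $1\le|v_A|\le N_\kappa$, and let $A\xrightarrow{w}F$ be a path in $\mathcal{A}$ from $A$ to a final state $F$. Then $w$ is a prefix of some word in $v_A^+$. In addition, the word $v_A$ is uniquely determined by the conditions $A\xrightarrow{v_A}A$ and $1\le|v_A|\le N_\kappa$; the loop $A\xrightarrow{v_A}A$ visits every other state $B\in\kappa$ exactly once, so it forms a Hamiltonian cycle of $\kappa$, and $|v_A|=N_\kappa$.
   Context: $\Sigma$ is a finite alphabet with involution $a\mapsto\overline a$ (bijection, $\overline{\overline a}=a$), extended to words by $\overline{a_1\cdots a_m}=\overline{a_m}\cdots\overline{a_1}$ and to languages elementwise. $k\ge1$ is a fixed integer, $[k]=\{0,\dots,k\}$. $\mathcal{H}_k(L_1,L_2)=\{\gamma\alpha\beta\overline\alpha\overline\gamma: (\gamma\alpha\beta\overline\alpha\in L_1\text{ or }\alpha\beta\overline\alpha\overline\gamma\in L_2),\ |\alpha|=k\}$. $\mathcal{A}_1$ is a complete DFA accepting $L_1$ (states $\mathcal{Q}_1$, initial $q_{01}$, final $\mathcal{F}_1$); $\mathcal{A}_2$ a complete DFA accepting $\overline{L_2}$ (states $\mathcal{Q}_2$, initial $q_{02}$, final $\mathcal{F}_2$); $p\cdot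 w$ is the state reached from $p$ reading $w$. $\mathcal{Q}=\{(q_{01}\cdot w,q_{02}\cdot w): w\in\Sigma^*\}$, $P\cdot a=(p_1\cdot a,p_2\cdot a)$. A quadruple $(p_1,p_2,q_1,q_2)$ is a bridge if $\{\beta: p_1\cdot\beta=q_1,\ p_2\cdot\overline\beta=q_2\}\neq\emptyset$. The NFA $\mathcal{A}$ has states $((p_1,p_2),q_1,q_2,\ell)$ with $(p_1,p_2)\in\mathcal{Q}$, $\ell\in[k]$, $(p_1,p_2,q_1,q_2)$ a bridge; $a$-transitions (present when both endpoints are states): $(P,q_1\cdot\overline a,q_2\cdot\overline a,0)\xrightarrow{a}(P\cdot a,q_1,q_2,0)$ if $q_1\cdot\overline a\notin\mathcal{F}_1$ and $q_2\cdot\overline a\notin\mathcal{F}_2$; $(P,q_1\cdot\overline a,q_2\cdot\overline a,0)\xrightarrow{a}(P\cdot a,q_1,q_2,1)$ if $q_1\cdot\overline a\in\mathcal{F}_1$ or $q_2\cdot\overline a\in\mathcal{F}_2$; $(P,q_1\cdot\overline a,q_2\cdot\overline a,\ell)\xrightarrow{a}(P\cdot a,q_1,q_2,\ell+1)$ for $1\le\ell<k$. Initial states: $((q_{01},q_{02}),q_1',q_2',0)$; final states: all states at level $k$. A strongly connected component of $\mathcal{A}$ (as a directed graph) is non-trivial if it contains a path of length $\ge1$ from a state to itself. *)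

(* Defs.v *)
From mathcomp Require Import all_boot.
Set Implicit Arguments. Unset Strict Implicit. Unset Printing Implicit Defensive.

Record dfa (Sigma : finType) := DFA {
  dstate : finType;
  dtrans : dstate -> Sigma -> dstate;
  dinit : dstate;
  dfinal : {set dstate} }.

Definition run (Sigma : finType) (M : dfa Sigma) (p : dstate M) (w : seq Sigma) : dstate M :=
  foldl (@dtrans _ M) p w.

Definition accepts (Sigma : finType) (M : dfa Sigma) (w : seq Sigma) : Prop :=
  run (dinit M) w \in dfinal M.

Definition language (Sigma : finType) := seq Sigma -> Prop.

Definition regular (Sigma : finType) (L : language Sigma) : Prop :=
  exists M : dfa Sigma, forall w, L w <-> accepts M w.

Definition barw (Sigma : finType) (bar : Sigma -> Sigma) (w : seq Sigma) : seq Sigma :=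
  rev (map bar w).

Definition hairpin (Sigma : finType) (bar : Sigma -> Sigma) (k : nat)
    (L1 L2 : language Sigma) : language Sigma :=
  fun u => exists g al be : seq Sigma,
    size al = k /\
    u = g ++ al ++ be ++ barw bar al ++ barw bar g /\
    (L1 (g ++ al ++ be ++ barw bar al) \/ L2 (al ++ be ++ barw bar al ++ barw bar g)).

Definition L1 (Sigma : finType) (A1 : dfa Sigma) : language Sigma := fun w => accepts A1 w.
(* A2 accepts bar(L2), i.e. L2 = { w | bar w accepted by A2 } *)
Definition L2 (Sigma : finType) (bar : Sigma -> Sigma) (A2 : dfa Sigma) : language Sigma :=
  fun w => accepts A2 (barw bar w).

Section NFA.
Variables (Sigma : finType) (bar : Sigma -> Sigma) (k : nat) (A1 A2 : dfa Sigma).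

Definition nstate : finType :=
  (dstate A1 * dstate A2 * dstate A1 * dstate A2 * 'I_k.+1)%type.

Definition inQ (p1 : dstate A1) (p2 : dstate A2) : Prop :=
  exists w, p1 = run (dinit A1) w /\ p2 = run (dinit A2) w.

Definition bridge (p1 : dstate A1) (p2 : dstate A2) (q1 : dstate A1) (q2 : dstate A2) : Prop :=
  exists beta : seq Sigma, run p1 beta = q1 /\ run p2 (barw bar beta) = q2.

Definition isState (x : nstate) : Prop :=
  let '(p1, p2, q1, q2, l) := x in inQ p1 p2 /\ bridge p1 p2 q1 q2.

Definition step (x : nstate) (a : Sigma) (y : nstate) : Prop :=
  isState x /\ isState y /\
  let '(p1, p2, r1, r2, l) := x in
  let '(p1', p2', q1, q2, l') := y in
  [/\ p1' = dtrans p1 a, p2' = dtrans p2 a,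
      r1 = dtrans q1 (bar a), r2 = dtrans q2 (bar a) &
      [\/ [/\ nat_of_ord l = 0, nat_of_ord l' = 0,
              r1 \notin dfinal A1 & r2 \notin dfinal A2],
          [/\ nat_of_ord l = 0, nat_of_ord l' = 1 &
              (r1 \in dfinal A1 \/ r2 \in dfinal A2)]
        | [/\ 1 <= nat_of_ord l, nat_of_ord l < k & nat_of_ord l' = (nat_of_ord l).+1]]].

Definition initial (x : nstate) : Prop :=
  isState x /\
  let '(p1, p2, _, _, l) := x in [/\ p1 = dinit A1, p2 = dinit A2 & nat_of_ord l = 0].

Definition final (x : nstate) : Prop :=
  isState x /\ let '(_, _, _, _, l) := x in nat_of_ord l = k.

Fixpoint lpath (x : nstate) (w : seq Sigma) (xs : seq nstate) : Prop :=
  match w, xs with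
  | [::], [::] => True
  | a :: w', y :: xs' => step x a y /\ lpath y w' xs'
  | _, _ => False
  end.

Definition reach (x : nstate) (w : seq Sigma) (y : nstate) : Prop :=
  exists xs, lpath x w xs /\ last x xs = y.

Definition is_scc (K : {set nstate}) : Prop :=
  exists x, isState x /\
    forall y, y \in K <-> ((exists u, reach x u y) /\ (exists u, reach y u x)).

Definition nontrivial_scc (K : {set nstate}) : Prop :=
  exists x, x \in K /\ exists u, 1 <= size u /\ reach x u x.

End NFA.

(* Main.v *)
Require Import Defs.
From mathcomp Require Import all_boot.
From mathcomp Require Import zify.
Set Implicit Arguments. Unset Strict Implicit. Unset Printing Implicit Defensive.

Section Aux.
Variables (Sigma : finType) (bar : Sigma -> Sigma) (k : nat) (A1 A2 : dfa Sigma).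
Local Notation NS := (nstate k A1 A2).
Local Notation step := (@Defs.step Sigma bar k A1 A2).
Local Notation lpath := (@Defs.lpath Sigma bar k A1 A2).
Local Notation reach := (@Defs.reach Sigma bar k A1 A2).
Local Notation isState := (@Defs.isState Sigma bar k A1 A2).

Definition P1 (x : NS) : dstate A1 := x.1.1.1.1.
Definition P2 (x : NS) : dstate A2 := x.1.1.1.2.
Definition Q1 (x : NS) : dstate A1 := x.1.1.2.
Definition Q2 (x : NS) : dstate A2 := x.1.2.
Definition lev (x : NS) : nat := x.2.

Lemma NS_eq (x y : NS) : P1 x = P1 y -> P2 x = P2 y -> Q1 x = Q1 y -> Q2 x = Q2 y ->
  lev x = lev y -> x = y.
Proof.
case: x => [[[[a b] c] d] e]; case: y => [[[[a' b'] c'] d'] e'].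
rewrite /P1 /P2 /Q1 /Q2 /lev /= => -> -> -> -> /val_inj -> //.
Qed.

Lemma stepE x a y : step x a y ->
  [/\ isState x, isState y, P1 y = dtrans (P1 x) a, P2 y = dtrans (P2 x) a &
   [/\ Q1 x = dtrans (Q1 y) (bar a), Q2 x = dtrans (Q2 y) (bar a) &
   [\/ [/\ lev x = 0, lev y = 0, Q1 x \notin dfinal A1 & Q2 x \notin dfinal A2],
       [/\ lev x = 0, lev y = 1 & (Q1 x \in dfinal A1 \/ Q2 x \in dfinal A2)]
     | [/\ 1 <= lev x, lev x < k & lev y = (lev x).+1]]]].
Proof.
case: x => [[[[a1 b1] c1] d1] e1]; case: y => [[[[a2 b2] c2] d2] e2].
rewrite /step /P1 /P2 /Q1 /Q2 /lev /=.
move=> [sx [sy [E1 E2 E3 E4 H]]]; subst; split; [exact: sx|exact: sy|done|done|split => //].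
Qed.

Lemma lpath_size x y ys : lpath x y ys -> size ys = size y.
Proof. elim: y x ys => [|a y IH] x [|z ys] //= [_ /IH -> //]. Qed.

Lemma lpath_cat x y1 y2 ys1 ys2 : lpath x y1 ys1 -> lpath (last x ys1) y2 ys2 ->
  lpath x (y1 ++ y2) (ys1 ++ ys2).
Proof.
elim: y1 x ys1 => [|a y1 IH] x [|z ys1] //= [H1 H2] H3; split => //; exact: IH.
Qed.

Lemma reach_cat x y z u v : reach x u y -> reach y v z -> reach x (u ++ v) z.
Proof.
move=> [ys [H1 H2]] [zs [H3 H4]]; exists (ys ++ zs); split.
  apply: lpath_cat => //; rewrite H2 //.
by rewrite last_cat H2.
Qed.

Lemma reach_nil x : reach x [::] x.
Proof. by exists [::]. Qed.

Lemma reach_pow x L n : reach x L x -> reach x (flatten (nseq n L)) x.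
Proof.
move=> H; elim: n => [|n IH] /=; first exact: reach_nil.
exact: reach_cat H IH.
Qed.

Lemma lpath_take x y ys n : lpath x y ys -> lpath x (take n y) (take n ys).
Proof.
elim: y x ys n => [|a y IH] x [|z ys] n //=.
by case: n => [|n] //= [H1 H2]; split => //; exact: IH.
Qed.

Lemma lpath_drop x y ys n : lpath x y ys ->
  lpath (last x (take n ys)) (drop n y) (drop n ys).
Proof.
elim: y x ys n => [|a y IH] x [|z ys] n //=.
case: n => [|n] /= H; first by []. 
case: H => _ H; exact: IH.
Qed.

Lemma reach_state x u y : reach x u y -> isState x -> isState y.
Proof.
move=> [ys [H <-]]; elim: u x ys H => [|a u IH] x [|z ys] //= [/stepE [_ sz _ _ _] H2] _.
exact: IH H2 sz.
Qed.

Lemma lpath_pq x y ys : lpath x y ys ->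
  [/\ P1 (last x ys) = run (P1 x) y, P2 (last x ys) = run (P2 x) y,
      Q1 x = run (Q1 (last x ys)) (barw bar y) & Q2 x = run (Q2 (last x ys)) (barw bar y)].
Proof.
elim: y x ys => [|a y IH] x [|z ys] //= [/stepE [_ _ e1 e2 [e3 e4 _]] /IH [f1 f2 f3 f4]].
rewrite /barw /= rev_cons -cats1 /run !foldl_cat /= -/(run _ _).
rewrite f1 f2 e1 e2 e3 e4 f3 f4 //.
Qed.

Lemma lev_up x y ys : lpath x y ys -> 1 <= lev x -> lev (last x ys) = lev x + size y.
Proof.
elim: y x ys => [|a y IH] x [|z ys] //=; first by rewrite addn0.
move=> [/stepE [_ _ _ _ [_ _ C]] H] l1.
case: C => [[e _ _ _]|[e _ _]|[_ _ e]]; try by rewrite e in l1.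
rewrite (IH _ _ H) e ?addSnnS //.
Qed.

Lemma loop_lev0 x L ys : lpath x L ys -> last x ys = x -> 1 <= size L -> lev x = 0.
Proof.
move=> H e s; case: (posnP (lev x)) => // l.
by move: (lev_up H l); rewrite e; lia.
Qed.


Lemma run_barw_cons (B : dfa Sigma) (q : dstate B) a y :
  run q (barw bar (a :: y)) = dtrans (run q (barw bar y)) (bar a).
Proof. by rewrite /barw /= rev_cons -cats1 /run foldl_cat. Qed.

Lemma lev_key x y ys : 1 <= k -> lpath x y ys -> lev x = 0 -> lev (last x ys) = k ->
  [/\ k <= size y,
      (run (Q1 (last x ys)) (barw bar (drop (size y - k) y)) \in dfinal A1 \/
       run (Q2 (last x ys)) (barw bar (drop (size y - k) y)) \in dfinal A2)
    & forall j, j + k < size y ->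
      run (Q1 (last x ys)) (barw bar (drop j y)) \notin dfinal A1 /\
      run (Q2 (last x ys)) (barw bar (drop j y)) \notin dfinal A2].
Proof.
move=> k1; elim: y x ys => [|a y IH] x [|z ys] //=.
- by move=> _ ->; lia.
move=> [S H] l0 lk.
have [_ _ _ _ [e1 e2 C]] := stepE S.
have [_ _ f1 f2] := lpath_pq H.
rewrite -/(last z ys) in lk *.
case: C => [[_ lz n1 n2]|[_ lz m12]|[l1 _ _]]; last by rewrite l0 in l1.
- have [IH1 IH2 IH3] := IH _ _ H lz lk.
  split; first by lia.
  + by have -> : (size y).+1 - k = (size y - k).+1 by lia.
  + case=> [|j] jk /=; last by apply: IH3; lia.
    by rewrite !run_barw_cons -f1 -f2 -e1 -e2.
- have := lev_up H; rewrite lz lk => /(_ isT) sk.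
  split; first by lia.
  + have -> : (size y).+1 - k = 0 by lia.
    by rewrite /= !run_barw_cons -f1 -f2 -e1 -e2.
  + move=> j; lia.
Qed.


Lemma initialE i : initial bar i -> [/\ isState i, P1 i = dinit A1, P2 i = dinit A2 & lev i = 0].
Proof. by case: i => [[[[a b] c] d] e] [? [? ? ?]]. Qed.

Lemma finalE f : final bar f -> isState f /\ lev f = k.
Proof. by case: f => [[[[a b] c] d] e] [? ?]. Qed.

Lemma stateE x : isState x -> bridge bar (P1 x) (P2 x) (Q1 x) (Q2 x).
Proof. by case: x => [[[[a b] c] d] e] [? ?]. Qed.

Lemma reach_state1 x u y : reach x u y -> 1 <= size u -> isState y.
Proof.
move=> [ys [H <-]]; elim: u x ys H => [|a u IH] x [|z ys] //= [/stepE [_ sz _ _ _] H] _.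
case: u IH H => [|b u] IH H; last by apply: IH H _.
by case: ys H.
Qed.

End Aux.

Section Words.
Variable (T : eqType).

Lemma catIl (s1 t1 s2 t2 : seq T) : s1 ++ t1 = s2 ++ t2 -> size s1 = size s2 -> s1 = s2 /\ t1 = t2.
Proof.
elim: s1 s2 => [|a s1 IH] [|b s2] /= e se //.
case: se => e2; case: e => -> /IH; case/(_ e2) => -> -> //.
Qed.

Lemma catIr (s1 t1 s2 t2 : seq T) : s1 ++ t1 = s2 ++ t2 -> size t1 = size t2 -> s1 = s2 /\ t1 = t2.
Proof.
move=> e st; have := congr1 size e; rewrite !size_cat st => h.
apply: catIl e _; lia.
Qed.

Lemma take_addcat (p s : seq T) n : take (size p + n) (p ++ s) = p ++ take n s.
Proof. by rewrite take_cat ltnNge leq_addr /= addKn. Qed.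

Lemma size_pow (L : seq T) n : size (flatten (nseq n L)) = n * size L.
Proof. by elim: n => [|n IH] //=; rewrite size_cat IH mulSn. Qed.

Lemma pow_add (L : seq T) m n : flatten (nseq (m + n) L) = flatten (nseq m L) ++ flatten (nseq n L).
Proof. by rewrite nseqD flatten_cat. Qed.

End Words.

Lemma run_cat (S : finType) (B : dfa S) (q : dstate B) s t : run q (s ++ t) = run (run q s) t.
Proof. by rewrite /run foldl_cat. Qed.

Lemma run_pow (S : finType) (B : dfa S) (q : dstate B) L n : run q L = q -> run q (flatten (nseq n L)) = q.
Proof. by move=> e; elim: n => [|n IH] //=; rewrite run_cat e IH. Qed.

Lemma barw_cat (S : finType) (bar : S -> S) s t : barw bar (s ++ t) = barw bar t ++ barw bar s.
Proof. by rewrite /barw map_cat rev_cat. Qed.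

Lemma barwK (S : finType) (bar : S -> S) : involutive bar -> forall s, barw bar (barw bar s) = s.
Proof. by move=> inv s; rewrite /barw map_rev revK -map_comp (eq_map inv) map_id. Qed.

Lemma barw3 (S : finType) (bar : S -> S) : involutive bar -> forall a b c,
  barw bar (a ++ b ++ barw bar c) = c ++ barw bar b ++ barw bar a.
Proof. by move=> inv a b c; rewrite !barw_cat barwK // catA. Qed.

Lemma size_barw (S : finType) (bar : S -> S) s : size (barw bar s) = size s.
Proof. by rewrite /barw size_rev size_map. Qed.

Lemma pigeon (T : finType) (f : nat -> T) : exists i j, i < j /\ f i = f j.
Proof.
pose g (i : 'I_#|T|.+1) := f i.
case: (boolP [exists i : 'I_#|T|.+1, [exists j : 'I_#|T|.+1, (i < j) && (g i == g j)]]).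
  by case/existsP => i /existsP [j /andP [lij /eqP e]]; exists i, j.
move/existsPn => H.
have inj : injective g.
  move=> i j e; case: (ltngtP i j) => l.
  - by move: (H i) => /existsPn /(_ j); rewrite l e eqxx.
  - by move: (H j) => /existsPn /(_ i); rewrite l e eqxx.
  - exact: val_inj.
by have := leq_card _ inj; rewrite card_ord ltnn.
Qed.

Section Part1.
Variables (Sigma : finType) (bar : Sigma -> Sigma) (k : nat) (A1 A2 : dfa Sigma).
Local Notation NS := (nstate k A1 A2).
Local Notation lpath := (@Defs.lpath Sigma bar k A1 A2).
Local Notation reach := (@Defs.reach Sigma bar k A1 A2).
Local Notation isState := (@Defs.isState Sigma bar k A1 A2).
Hypothesis inv : involutive bar.
Hypothesis k1 : 1 <= k.
Hypothesis reg : regular (hairpin bar k (L1 A1) (L2 bar A2)).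
Hypothesis trim : forall x : NS, isState x ->
     (exists i u, initial bar i /\ reach i u x) /\
     (exists f u, final bar f /\ reach x u f).

Local Notation Lp L n := (flatten (nseq n L)).

Lemma part1 (X : NS) L w F : reach X L X -> 1 <= size L -> reach X w F -> final bar F ->
  exists n, 0 < n /\ prefix w (Lp L n).
Proof.
move=> HL sL Hw HF.
have sX : isState X := reach_state1 HL sL.
have [[I [u [HI HIu]]] _] := trim sX.
have [_ iP1 iP2 il] := initialE HI.
have [us [Hus lus]] := HIu.
have [ls [Hls lls]] := HL.
have [uP1 uP2 _ _] := lpath_pq Hus.
have [lP1 lP2 _ _] := lpath_pq Hls.
rewrite lus iP1 iP2 in uP1 uP2; rewrite lls in lP1 lP2.
have [sF lF] := finalE HF.
have [beta [bQ1 bQ2]] := stateE sF.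
have runP1 m : run (dinit A1) (u ++ Lp L m) = P1 X by rewrite run_cat -uP1 run_pow // -lP1.
have runP2 m : run (dinit A2) (u ++ Lp L m) = P2 X by rewrite run_cat -uP2 run_pow // -lP2.
have keyx xx : reach I xx F -> [/\ k <= size xx,
      (run (dinit A1) (xx ++ beta ++ barw bar (drop (size xx - k) xx)) \in dfinal A1 \/
       run (dinit A2) (xx ++ barw bar beta ++ barw bar (drop (size xx - k) xx)) \in dfinal A2)
    & forall j, j + k < size xx ->
      run (dinit A1) (xx ++ beta ++ barw bar (drop j xx)) \notin dfinal A1 /\
      run (dinit A2) (xx ++ barw bar beta ++ barw bar (drop j xx)) \notin dfinal A2].
  move=> [zs [Hzs lzs]].
  have [zP1 zP2 _ _] := lpath_pq Hzs.
  rewrite lzs iP1 iP2 in zP1 zP2.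
  have := lev_key k1 Hzs il; rewrite lzs => /(_ lF).
  rewrite -bQ1 -bQ2 zP1 zP2 => -[h1 h2 h3]; split => //.
    by rewrite !run_cat.
  by move=> j /h3; rewrite !run_cat.
have pathm m : reach I (u ++ Lp L m ++ w) F.
  by apply: (reach_cat HIu); apply: reach_cat Hw; apply: reach_pow.
have [M HM] := reg.
pose c := size w + 1.
have [i [j [lij eqij]]] := pigeon (fun n => run (dinit M) (u ++ Lp L (n * c))).
move: eqij => /=.
have -> : j * c = i * c + (j - i) * c by rewrite -mulnDl subnKC // ltnW.
set m0 := i * c; set t := (j - i) * c => eqij.
have st : size w < size (Lp L t).
  rewrite size_pow /t /c; have h1 : 0 < j - i by lia.
  rewrite -mulnA; apply: (leq_trans _ (leq_pmull _ h1)).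
  by apply: (leq_trans _ (leq_pmulr _ sL)); rewrite addn1.
have tpos : 0 < t by move: st; rewrite size_pow; case: (t) => //.
case: (boolP (prefix w (Lp L t))) => [pw|npw]; first by exists t.
exfalso.
set x0 := u ++ Lp L m0 ++ w.
set x1 := u ++ Lp L (m0 + t) ++ w.
have [kx0 memx0 nonx0] := keyx x0 (pathm m0).
have [kx1 _ nonx1] := keyx x1 (pathm (m0 + t)).
have sx01 : size x0 <= size x1 by rewrite /x0 /x1 !size_cat !size_pow; lia.
have rx1 : run (dinit A1) x1 = run (dinit A1) x0 by rewrite /x0 /x1 !catA !(run_cat _ _ w) !runP1.
have rx2 : run (dinit A2) x1 = run (dinit A2) x0 by rewrite /x0 /x1 !catA !(run_cat _ _ w) !runP2.
have Hh : hairpin bar k (L1 A1) (L2 bar A2) (x0 ++ beta ++ barw bar x0).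
  have e := cat_take_drop (size x0 - k) x0.
  exists (take (size x0 - k) x0), (drop (size x0 - k) x0), beta.
  split; first by rewrite size_drop; lia.
  split; first by rewrite -barw_cat e [in RHS]catA e.
  case: memx0 => m; [left|right].
  - by rewrite /L1 /accepts catA e.
  - by rewrite /L2 /accepts !barw_cat !barwK // e -catA.
have Hz : hairpin bar k (L1 A1) (L2 bar A2) (x1 ++ beta ++ barw bar x0).
  have pm R : run (dinit M) (u ++ Lp L (m0 + t) ++ R) = run (dinit M) (u ++ Lp L m0 ++ R).
    by rewrite catA [in LHS]run_cat -eqij -run_cat -catA.
  apply/HM; move/HM: Hh; rewrite /accepts /x1 /x0 -?catA pm -?catA //.
have e1 : x1 ++ beta ++ barw bar x0 = (u ++ Lp L m0) ++ (Lp L t ++ w ++ beta ++ barw bar x0).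
  by rewrite /x1 pow_add -!catA.
have e0 : size x0 = size (u ++ Lp L m0) + size w by rewrite /x0 catA size_cat.
have e2 : x0 = (u ++ Lp L m0) ++ w by rewrite /x0 catA.
clearbody x0 x1.
have [g [al [be [sal [ez C]]]]] := Hz.
have bz : barw bar (x1 ++ beta ++ barw bar x0) = x0 ++ barw bar beta ++ barw bar x1.
  exact: barw3.
have jk : size g + k < size x0.
  rewrite ltnNge; apply/negP => le.
  have t1 : take (size x0) (barw bar (x1 ++ beta ++ barw bar x0)) = x0.
    by rewrite bz take_size_cat.
  have t2 : take (size x0) (x1 ++ beta ++ barw bar x0) = x0.
    have ez' : x1 ++ beta ++ barw bar x0 = (g ++ al) ++ be ++ barw bar (g ++ al).
      by rewrite ez barw_cat -!catA.
    have le' : size x0 <= size (g ++ al) by rewrite size_cat sal.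
    apply: (etrans _ t1); rewrite ez' barw3 // takel_cat // [RHS]takel_cat //.
  move: t2; rewrite e1 e0 take_addcat {2}e2 => /catIl [] // _.
  rewrite takel_cat; last by apply: ltnW.
  by move=> e; move: npw; rewrite prefixE e eqxx.
have jx : size g <= size x0 by lia.
case: C => C.
- move: C; rewrite /L1 /accepts.
  have : (g ++ al ++ be ++ barw bar al) ++ barw bar g =
         (x1 ++ beta ++ barw bar (drop (size g) x0)) ++ barw bar (take (size g) x0).
    by rewrite -!catA -(barw_cat _ (take (size g) x0)) (cat_take_drop (size g) x0) ez.
  case/catIr; first by rewrite !size_barw size_takel.
  move=> -> _; rewrite run_cat rx1 -run_cat.
  by have [/negP] := nonx0 _ jk.
- move: C; rewrite /L2 /accepts.
  have : drop (size g) (x1 ++ beta ++ barw bar x0) = drop (size g) x1 ++ beta ++ barw bar x0.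
    rewrite drop_cat ifT //; lia.
  rewrite ez drop_size_cat // => ->.
  rewrite !barw_cat barwK // -catA run_cat -rx2 -run_cat.
  have jk1 : size g + k < size x1 by lia.
  by have [_ /negP] := nonx1 _ jk1.
Qed.



Lemma pow_take (L : seq Sigma) n n' N : N <= size (Lp L n) -> N <= size (Lp L n') ->
  take N (Lp L n) = take N (Lp L n').
Proof.
wlog le : n n' / n <= n'.
  move=> H h1 h2; case: (leqP n n') => l; first exact: H.
  by apply/esym/H => //; apply: ltnW.
move=> h1 _; rewrite -(subnKC le) pow_add takel_cat //.
Qed.

Lemma loops_commute X L1 L2 : reach X L1 X -> reach X L2 X -> 1 <= size L1 -> 1 <= size L2 ->
  L1 ++ L2 = L2 ++ L1.
Proof.
move=> H1 H2 s1 s2.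
have sX : isState X := reach_state1 H1 s1.
have [_ [F [w0 [HF Hw0]]]] := trim sX.
have P12 : reach X (L1 ++ L2 ++ w0) F by apply: (reach_cat H1); apply: reach_cat H2 Hw0.
have P21 : reach X (L2 ++ L1 ++ w0) F by apply: (reach_cat H2); apply: reach_cat H1 Hw0.
have [n1 [_ /prefixP [r1 e1]]] := part1 H1 s1 P12 HF.
have [n2 [_ /prefixP [r2 e2]]] := part1 H1 s1 P21 HF.
have t1 : take (size L1 + size L2) (Lp L1 n1) = L1 ++ L2.
  by rewrite e1 -!catA catA (take_size_cat _ (size_cat _ _)).
have t2 : take (size L1 + size L2) (Lp L1 n2) = L2 ++ L1.
  by rewrite addnC e2 -!catA catA (take_size_cat _ (size_cat _ _)).
rewrite -t1 -t2; apply: pow_take.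
- by rewrite e1 !size_cat; lia.
- by rewrite e2 !size_cat; lia.
Qed.

Lemma reach1 x a y : step bar x a y -> reach x [:: a] y.
Proof. by move=> S; exists [:: y]. Qed.

Lemma det X a b Y Y' s s' : step bar X a Y -> step bar X b Y' -> reach Y s X -> reach Y' s' X ->
  a = b /\ Y = Y'.
Proof.
move=> S S' R R'.
have L1 := reach_cat (reach1 S) R.
have L2 := reach_cat (reach1 S') R'.
have := loops_commute L1 L2 isT isT => /= -[eab ess].
split => //.
have [_ _ pY1 pY2 _] := stepE S.
have [_ _ pY1' pY2' _] := stepE S'.
have [ys [Hys lys]] := R; have [ys' [Hys' lys']] := R'.
have [_ _ qY1 qY2] := lpath_pq Hys; have [_ _ qY1' qY2'] := lpath_pq Hys'.
rewrite lys in qY1 qY2; rewrite lys' in qY1' qY2'.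
have [l1 [Hl1 ll1]] := L2; have [_ _ lq1 lq2] := lpath_pq Hl1; rewrite ll1 in lq1 lq2.
have [l2 [Hl2 ll2]] := L1; have [_ _ lq1' lq2'] := lpath_pq Hl2; rewrite ll2 in lq1' lq2'.
have levY : lev Y = 0.
  have [zs [Hz lz]] := reach_cat R (reach1 S).
  by apply: loop_lev0 Hz lz _; rewrite size_cat addn1.
have levY' : lev Y' = 0.
  have [zs [Hz lz]] := reach_cat R' (reach1 S').
  by apply: loop_lev0 Hz lz _; rewrite size_cat addn1.
apply: NS_eq.
- by rewrite pY1 pY1' eab.
- by rewrite pY2 pY2' eab.
- rewrite qY1 qY1'.
  have E1 : run (Q1 X) (barw bar s) = run (Q1 X) (barw bar (s ++ b :: s')) by rewrite barw_cat run_cat -lq1.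
  have E2 : run (Q1 X) (barw bar s') = run (Q1 X) (barw bar (s' ++ a :: s)) by rewrite barw_cat run_cat -lq1'.
  by rewrite E1 E2 ess.
- rewrite qY2 qY2'.
  have E1 : run (Q2 X) (barw bar s) = run (Q2 X) (barw bar (s ++ b :: s')) by rewrite barw_cat run_cat -lq2.
  have E2 : run (Q2 X) (barw bar s') = run (Q2 X) (barw bar (s' ++ a :: s)) by rewrite barw_cat run_cat -lq2'.
  by rewrite E1 E2 ess.
- by rewrite levY levY'.
Qed.


Section SCC.
Variables (K : {set NS}) (x0 : NS).
Hypothesis HK : forall y, y \in K <-> ((exists u, reach x0 u y) /\ (exists u, reach y u x0)).

Lemma inK_path A y ys : A \in K -> lpath A y ys -> last A ys \in K -> all (mem K) ys.
Proof.
elim: y A ys => [|a y IH] A [|z ys] //= HA [S H] Hl.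
have zK : z \in K.
  have [[u1 R1] _] := (HK A).1 HA; have [_ [u2 R2]] := (HK _).1 Hl.
  apply/HK; split.
    by exists (u1 ++ [:: a]); apply: reach_cat R1 (reach1 S).
  by exists (y ++ u2); apply: reach_cat _ R2; exists ys.
apply/andP; split; first exact: zK.
exact: IH H Hl.
Qed.

Lemma back Z X : Z \in K -> X \in K -> exists s, reach Z s X.
Proof.
move=> /HK [_ [u1 R1]] /HK [[u2 R2] _]; exists (u1 ++ u2); exact: reach_cat R1 R2.
Qed.

Lemma path_uniq X y y' ys ys' : X \in K -> lpath X y ys -> lpath X y' ys' ->
  all (mem K) ys -> all (mem K) ys' -> size y = size y' -> y = y' /\ ys = ys'.
Proof.
elim: y X y' ys ys' => [|a y IH] X [|b y'] [|Z zs] [|Z' zs'] //=.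
move=> XK [S H] [S' H'] /andP [ZK aK] /andP [ZK' aK'] [sy].
have [s R] := back ZK XK; have [s' R'] := back ZK' XK.
have [eab eZ] := det S S' R R'; subst b Z'.
by have [-> ->] := IH _ _ _ _ ZK H H' aK aK' sy.
Qed.

End SCC.


Lemma last_take (T : Type) (x : T) s m : 0 < m <= size s -> last x (take m s) = nth x s m.-1.
Proof.
move=> /andP [m0 ms]; rewrite -nth_last size_takel // nth_take //.
by case: m m0 {ms}.
Qed.

Lemma main (K : {set NS}) : is_scc bar K ->
  forall (A : NS) (vA : seq Sigma) (xs : seq NS),
    A \in K -> lpath A vA xs -> last A xs = A -> all (mem K) xs ->
    1 <= size vA <= #|K| ->
  forall (w : seq Sigma) (F : NS), reach A w F -> final bar F ->
    (exists n, 0 < n /\ prefix w (flatten (nseq n vA))) /\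
    (forall v, reach A v A -> 1 <= size v <= #|K| -> v = vA) /\
    (forall B, B \in K -> B != A -> count_mem B xs = 1) /\
    size vA = #|K|.
Proof.
move=> [x0 [sx0 HK]] A vA xs AK Hp Hl Hall /andP [s1 sN] w F Hw HF.
have RA : reach A vA A by exists xs.
have sxs : size xs = size vA := lpath_size Hp.
split; first exact: part1 RA s1 Hw HF.
have Axs : A \in xs.
  move: Hl sxs; case: (xs) => [|z zs] Hl' sz; first by rewrite -sz in s1.
  by rewrite -Hl' /= mem_last.
have allt m : all (mem K) (take m xs).
  by move: Hall; rewrite -[xs in all _ xs](cat_take_drop m) all_cat => /andP [].
have alld m : all (mem K) (drop m xs).
  by move: Hall; rewrite -[xs in all _ xs](cat_take_drop m) all_cat => /andP [].
have sub : forall B, B \in K -> B \in xs.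
  move=> B BK; have [u [ys [Hys lys]]] := back HK AK BK.
  have BK' : last A ys \in K by rewrite lys.
  have aK := inK_path HK AK Hys BK'; clear BK'.
  rewrite -lys; move: {2}(size u) (erefl (size u)) => m.
  elim/ltn_ind: m u ys Hys aK {lys} => m IH u ys Hys aK su.
  case: (leqP m (size vA)) => lm.
  - have Ht := lpath_take m Hp.
    have [_ ->] : u = take m vA /\ ys = take m xs.
      by apply: (path_uniq HK AK Hys Ht aK (allt m)); rewrite size_takel // -su.
    by have := mem_last A (take m xs); rewrite inE => /orP [/eqP -> // | /mem_take].
  - have Ht := lpath_take (size vA) Hys.
    have aKt : all (mem K) (take (size vA) ys).
      by move: aK; rewrite -[ys in all _ ys](cat_take_drop (size vA)) all_cat => /andP [].
    have aKd : all (mem K) (drop (size vA) ys).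
      by move: aK; rewrite -[ys in all _ ys](cat_take_drop (size vA)) all_cat => /andP [].
    have [_ e] : take (size vA) u = vA /\ take (size vA) ys = xs.
      by apply: (path_uniq HK AK Ht Hp aKt Hall); rewrite size_takel // su ltnW.
    have Hd := lpath_drop (size vA) Hys.
    rewrite e Hl in Hd.
    rewrite -(cat_take_drop (size vA) ys) last_cat e Hl.
    apply: (IH (m - size vA) _ _ _ Hd aKd); first by lia.
    by rewrite size_drop su.
have c1 : #|K| <= #|xs| by apply: subset_leq_card; apply/subsetP => B; exact: sub.
have c2 := card_size xs.
have uxs : uniq xs by apply/card_uniqP; lia.
have NK : size vA = #|K| by lia.
split; last split; last by [].
- move=> v [vs [Hv lv]] /andP [v1 vN].
  have AK' : last A vs \in K by rewrite lv.
  have aKv := inK_path HK AK Hv AK'.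
  have Ht := lpath_take (size v) Hp.
  have [ev evs] : v = take (size v) vA /\ vs = take (size v) xs.
    by apply: (path_uniq HK AK Hv Ht aKv (allt _)); rewrite size_takel //; lia.
  suff sv : size v = size vA by rewrite ev sv take_size.
  apply/eqP; rewrite eqn_leq -NK in vN *; rewrite vN /=; rewrite leqNgt; apply/negP => lt.
  have : last A (take (size v) xs) = last A xs by rewrite -evs lv Hl.
  rewrite last_take; last by rewrite sxs v1 ltnW.
  have h1 : (size v).-1 < size xs by rewrite sxs; lia.
  have h2 : (size xs).-1 < size xs by rewrite sxs; lia.
  rewrite -nth_last => /eqP; rewrite nth_uniq // => /eqP; rewrite sxs; lia.
- by move=> B BK _; rewrite count_uniq_mem // sub.
Qed.

End Part1.

Theorem lemma6 (Sigma : finType) (bar : Sigma -> Sigma) (k : nat) (A1 A2 : dfa Sigma) :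
  involutive bar -> 1 <= k ->
  regular (hairpin bar k (L1 A1) (L2 bar A2)) ->
  (forall x : nstate k A1 A2, isState bar x ->
     (exists i u, initial bar i /\ reach bar i u x) /\
     (exists f u, final bar f /\ reach bar x u f)) ->
  forall K : {set nstate k A1 A2}, is_scc bar K -> nontrivial_scc bar K ->
  forall (A : nstate k A1 A2) (vA : seq Sigma) (xs : seq (nstate k A1 A2)),
    A \in K -> lpath bar A vA xs -> last A xs = A -> all (mem K) xs ->
    1 <= size vA <= #|K| ->
  forall (w : seq Sigma) (F : nstate k A1 A2), reach bar A w F -> final bar F ->
    (exists n, 0 < n /\ prefix w (flatten (nseq n vA))) /\
    (forall v, reach bar A v A -> 1 <= size v <= #|K| -> v = vA) /\
    (forall B, B \in K -> B != A -> count_mem B xs = 1) /\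
    size vA = #|K|.
Proof.
move=> inv k1 reg trim K HK _ A vA xs H1 H2 H3 H4 H5 w F H6 H7.
exact: (main inv k1 reg trim HK H1 H2 H3 H4 H5 H6 H7).
Qed.
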